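(* There is no finite (deterministic) matrix $\mathbb{M}$ such that $\vdash_{\mathbb{B}_\diamond}=\vdash_{\mathbb{M}}$ or $\rhd_{\mathbb{B}_\diamond}=\rhd_{\mathbb{M}}$.
   Context: $\mathbb{B}_\diamond=\langle\{0,1\},\cdot,\{1\}\rangle$ is the two-valued Nmatrix with one binary connective $\diamond$ (platypus) interpreted by $\diamond(0,0)=\{0\}$, $\diamond(1,1)=\{1\}$, $\diamond(0,1)=\diamond(1,0)=\{0,1\}$. For an Nmatrix/matrix $\mathbb{M}$ with designated set $D$, $\Gamma\rhd_{\mathbb{M}}\Delta$ iff every $\mathbb{M}$-valuation $v$ with $v(\Gamma)\subseteq D$ has $v(\Delta)\cap D\neq\emptyset$, and $\vdash_{\mathbb{M}}$ is its single-conclusion fragment ($\Gamma\vdash_{\mathbb{M}}\varphi$ iff $\Gamma\rhd_{\mathbb{M}}\{\varphi\}$). *)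

(* Defs.v *)
From mathcomp Require Import all_boot.
Set Implicit Arguments. Unset Strict Implicit. Unset Printing Implicit Defensive.

Inductive fm : Type :=
| Var : nat -> fm
| Dia : fm -> fm -> fm.

Definition fmset := fm -> Prop.

(* The Nmatrix B_diamond: values {0,1} = bool (true = 1), designated {1}.
   diaB x y z  <->  z is in the set diamond(x,y). *)
Definition diaB (x y z : bool) : bool := if x == y then z == x else true.

Definition Bval (v : fm -> bool) : Prop :=
  forall a b, diaB (v a) (v b) (v (Dia a b)).

Definition B_mc (G D : fmset) : Prop :=
  forall v, Bval v -> (forall f, G f -> v f = true) -> exists g, D g /\ v g = true.

Definition B_sc (G : fmset) (f : fm) : Prop := B_mc G (fun g => g = f).

(* Valuations are the homomorphisms, i.e. extensions of assignments s. *)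
Fixpoint meval (V : Type) (op : V -> V -> V) (s : nat -> V) (f : fm) : V :=
  match f with
  | Var n => s n
  | Dia a b => op (meval op s a) (meval op s b)
  end.

Definition M_mc (V : finType) (op : V -> V -> V) (Dsg : pred V) (G D : fmset) : Prop :=
  forall s : nat -> V, (forall f, G f -> meval op s f \in Dsg) ->
    exists g, D g /\ meval op s g \in Dsg.

Definition M_sc (V : finType) (op : V -> V -> V) (Dsg : pred V) (G : fmset) (f : fm) : Prop :=
  M_mc op Dsg G (fun g => g = f).

(* Main.v *)
Require Import Defs.
From mathcomp Require Import all_boot.

Fixpoint chi (k : nat) : fm := match k with 0 => Var 1 | k.+1 => Dia (Var 1) (chi k) end.
Definition phi k := Dia (Var 0) (chi k).
Fixpoint depth (f : fm) : nat := match f with Var _ => 0 | Dia _ b => (depth b).+1 end.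
Lemma depth_chi k : depth (chi k) = k. Proof. by elim: k => //= k ->. Qed.

Lemma meval_phi (V : Type) (op : V -> V -> V) s s' k :
  s 0 = s' 0 -> s 1 = s' 1 -> meval op s (phi k) = meval op s' (phi k).
Proof.
move=> h0 h1 /=; rewrite h0; congr (op _ _).
by elim: k => //= k ->; rewrite h1.
Qed.

Fixpoint vB (i : nat) (f : fm) : bool :=
  match f with
  | Var n => n == 0
  | Dia a b => if vB i a == vB i b then vB i a else depth b == i
  end.

Lemma vB_Bval i : Bval (vB i).
Proof. move=> a b /=; rewrite /diaB; case: eqP => [->|_]; by rewrite ?eqxx. Qed.

Lemma vB_chi i k : vB i (chi k) = false.
Proof. by elim: k => //= k ->. Qed.

Lemma vB_phi i k : vB i (phi k) = (k == i).
Proof. by rewrite /= vB_chi depth_chi. Qed.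

Lemma key (V : finType) (op : V -> V -> V) :
  exists i j, i != j /\ forall s, meval op s (phi i) = meval op s (phi j).
Proof.
pose F := fun k : 'I_(#|{ffun V * V -> V}|.+1) =>
  [ffun xy : V * V => meval op (fun n => if n == 0 then xy.1 else xy.2) (phi k)].
have : ~~ injectiveb F.
  apply/injectiveP => inj; have := leq_card F inj; by rewrite card_ord ltnn.
case/injectivePn => i [j ij Fij].
exists (nat_of_ord i), (nat_of_ord j); split; first exact: ij.
move=> s.
have h := congr1 (fun g : {ffun V * V -> V} => g (s 0, s 1)) Fij.
rewrite /F !ffunE in h.
rewrite (@meval_phi V op s (fun n : nat => if n == 0 then (s 0, s 1).1 else (s 0, s 1).2) (nat_of_ord i)) //.
rewrite (@meval_phi V op s (fun n : nat => if n == 0 then (s 0, s 1).1 else (s 0, s 1).2) (nat_of_ord j)) //.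
Qed.

Theorem theorem1 :
  ~ exists (V : finType) (op : V -> V -> V) (Dsg : pred V),
      (forall (G : fmset) (f : fm), B_sc G f <-> M_sc op Dsg G f) \/
      (forall (G D : fmset), B_mc G D <-> M_mc op Dsg G D).
Proof.
case=> V [op [Dsg H]].
have [i [j [ij E]]] := @key V op.
have Mok : M_mc op Dsg (fun g => g = phi i) (fun g => g = phi j).
  move=> s hs; exists (phi j); split => //; rewrite -E; exact: hs.
have Bno : ~ B_mc (fun g => g = phi i) (fun g => g = phi j).
  move=> hb; have [g [-> ]] := hb _ (vB_Bval i) (fun f e => ltac:(by rewrite e vB_phi eqxx)).
  by rewrite vB_phi eq_sym (negbTE ij).
case: H => H; apply: Bno.
- exact: (proj2 (H _ _) Mok).
- exact: (proj2 (H _ _) Mok).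
Qed.
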